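(* In the setting below, for any $\vec w=(w_1,\ldots,w_n)$ with each $w_i\in W_M^Q$, \[ \theta(\vec w)-\theta^M(\vec w)=\mathrm{expdim}_G(\vec w)-\mathrm{expdim}_M(\vec w). \]
   Context: $G=\mathrm{Sp}(2r)$ with standard torus, Borel, positive roots $R^+$ ($\epsilon_i-\epsilon_j$, $i<j$; $\epsilon_i+\epsilon_j$, $i\le j$) and simple roots $\alpha_i=\epsilon_i-\epsilon_{i+1}$, $\alpha_r=2\epsilon_r$; $x_1,\ldots,x_r$ the dual basis to the simple roots. For $1\le k\le s<r$, $M\cong\mathrm{Sp}(2s)\times\mathrm{Sp}(2(r-s))$ is the centralizer in $G$ of $\tau=\mathrm{diag}(-1,\ldots,-1,1,\ldots,1,-1,\ldots,-1)$ ($2(r-s)$ ones), with roots the roots of $G$ trivial on $\tau$. $P$ is the maximal parabolic omitting $\alpha_k$ ($G/P\cong\mathrm{IG}(k,2r)$), $x_P=x_k$, $Q=M\cap P$ ($M/Q\cong\mathrm{IG}(k,2s)$), $x_Q=x_P$, $W_M^Q\subseteq W^P$ minimal coset representatives, $C_w$, $C^M_w$ the Schubert cells. $\chi_w=\sum_{\beta\in(R^+\setminus R^+_L)\cap w^{-1}R^+}\beta$ ($R_L^+$ positive roots of the Levi of $P$), $\chi^M_w$ the same sum over roots of $M$ only; $1$ denotes the identity of $W$. $\theta(\vec w)=(\chi_1-\sum_i\chi_{w_i})(x_P)$, $\theta^M(\vec w)=(\chi^M_1-\sum_i\chi^M_{w_i})(x_Q)$, $\mathrm{expdim}_G(\vec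 w)=\dim(G/P)-\sum_i\mathrm{codim}(C_{w_i})$, $\mathrm{expdim}_M(\vec w)=\dim(M/Q)-\sum_i\mathrm{codim}(C^M_{w_i})$. *)

(* Defs.v *)
(* Root system of type C_r = Sp(2r), Weyl group realized as
   the group of signed permutations of the r "signed indices" +-e_i. *)
From HB Require Import structures.
From mathcomp Require Import all_boot all_order all_algebra all_fingroup.
Set Implicit Arguments. Unset Strict Implicit. Unset Printing Implicit Defensive.
Import GRing.Theory Num.Theory.
Local Open Scope ring_scope.

Section TypeC.
Variable r : nat.

(* signed index (a, x) stands for e_a (x = false) or -e_a (x = true) *)
Definition sidx := ('I_r * bool)%type.

Definition evec (i : 'I_r) : 'rV[int]_r := delta_mx 0 i.
Definition svec (a : sidx) : 'rV[int]_r :=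
  (if a.2 then -1 else 1) *: evec a.1.

(* Positive roots, indexed by triples (i, j, b):
   b = false, i < j : eps_i - eps_j ;  b = true, i <= j : eps_i + eps_j
   (so (i,i,true) is 2 eps_i). *)
Definition rind := ('I_r * 'I_r * bool)%type.
Definition posroot (p : rind) : bool :=
  let '(i, j, b) := p in if b then (i <= j)%N else (i < j)%N.
Definition rvec (p : rind) : 'rV[int]_r :=
  let '(i, j, b) := p in evec i + (if b then evec j else - evec j).

Definition pos : seq 'rV[int]_r := [seq rvec p | p <- enum posroot].

Definition refl_fun (p : rind) (a : sidx) : sidx :=
  let '(i, j, b) := p in let '(c, x) := a in
  (if c == i then j else if c == j then i else c,
   if b && ((c == i) || (c == j)) then ~~ x else x).

Lemma refl_funK p : involutive (refl_fun p).
Proof.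
case: p => [[i j] b] [c x] /=.
case: (eqVneq i j) => [<-|nij].
  case: (eqVneq c i) => [->|nci]; rewrite ?eqxx ?(negPf nci) /=;
  by case: b => //=; rewrite ?negbK.
have nji : j != i by rewrite eq_sym.
case: (eqVneq c i) => [->|nci].
  by rewrite ?eqxx /= ?(negPf nji) ?(negPf nij) /= ?orbT; case: b => //=; rewrite ?negbK.
case: (eqVneq c j) => [->|ncj].
  by rewrite ?eqxx /= ?(negPf nji) ?(negPf nij) ?eqxx /= ?orbT; case: b => //=; rewrite ?negbK.
by rewrite /= (negPf nci) (negPf ncj); case: b.
Qed.

Definition refl (p : rind) : {perm sidx} := perm (inv_inj (refl_funK p)).

Definition act (g : {perm sidx}) (v : 'rV[int]_r) : 'rV[int]_r :=
  \sum_(a < r) v 0 a *: svec (g (a, false)).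

Definition lenG (w : {perm sidx}) : nat :=
  count (fun be => act w be \notin pos) pos.

Variables (s k : nat).

(* pairing beta(x_k), x_k the fundamental coweight dual to alpha_k
   (alpha_i = eps_i - eps_{i+1}, alpha_r = 2 eps_r); for k < r,
   x_k = eps_1^* + ... + eps_k^* . *)
Definition pairP (be : 'rV[int]_r) : int := \sum_(i < r | (i < k)%N) be 0 i.

(* beta is a root of the Levi L of P (omitting alpha_k) *)
Definition inLevi (be : 'rV[int]_r) : bool := pairP be == 0.

(* beta is trivial on tau = diag(-1 (s), 1 (2(r-s)), -1 (s)):
   beta(tau) = (-1)^(beta_1 + ... + beta_s) *)
Definition inM (be : 'rV[int]_r) : bool :=
  ~~ odd (absz (\sum_(i < r | (i < s)%N) be 0 i)).

(* Weyl groups of M and of the Levi of Q = M \cap P (roots R_L \cap R_M),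
   generated by the reflections in their roots *)
Definition WM : {set {perm sidx}} :=
  <<[set refl p | p in [pred p | posroot p && inM (rvec p)]]>>%g.
Definition WQ : {set {perm sidx}} :=
  <<[set refl p | p in [pred p | [&& posroot p, inM (rvec p) & inLevi (rvec p)]]]>>%g.

Definition lenM (w : {perm sidx}) : nat :=
  count (fun be => inM be && (act w be \notin pos)) pos.

(* W_M^Q : minimal-length representatives of the cosets w W_Q in W_M.
   In mathcomp (v * w) x = w (v x), so (v * w)%g is the composite w o v. *)
Definition WMQ (w : {perm sidx}) : bool :=
  (w \in WM) && [forall v in WQ, (lenM w <= lenM (v * w)%g)%N].

Definition chi (w : {perm sidx}) : 'rV[int]_r :=
  \sum_(be <- pos | ~~ inLevi be && (act w be \in pos)) be.
Definition chiM (w : {perm sidx}) : 'rV[int]_r :=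
  \sum_(be <- pos | [&& inM be, ~~ inLevi be & act w be \in pos]) be.

Definition theta (ws : seq {perm sidx}) : int :=
  pairP (chi 1%g - \sum_(w <- ws) chi w).
Definition thetaM (ws : seq {perm sidx}) : int :=
  pairP (chiM 1%g - \sum_(w <- ws) chiM w).

Definition dimGP : nat := count (fun be => ~~ inLevi be) pos.
Definition dimMQ : nat := count (fun be => inM be && ~~ inLevi be) pos.

(* Schubert cell C_w = B w P / P has dimension l(w) *)
Definition codimG (w : {perm sidx}) : int := (dimGP%:Z - (lenG w)%:Z).
Definition codimM (w : {perm sidx}) : int := (dimMQ%:Z - (lenM w)%:Z).

Definition expdimG (ws : seq {perm sidx}) : int :=
  dimGP%:Z - \sum_(w <- ws) codimG w.
Definition expdimM (ws : seq {perm sidx}) : int :=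
  dimMQ%:Z - \sum_(w <- ws) codimM w.

End TypeC.

(* Main.v *)
From Pilot Require Import Defs.
From mathcomp Require Import all_boot all_order all_algebra all_fingroup.
From mathcomp Require Import zify.
Set Implicit Arguments. Unset Strict Implicit. Unset Printing Implicit Defensive.
Import GRing.Theory Num.Theory.
Local Open Scope ring_scope.

Notation dact := Pilot.Defs.act.

Definition sg (x : bool) : int := if x then -1 else 1.
Definition negs r (u : sidx r) : sidx r := (u.1, ~~ u.2).

Lemma svecE r (u : sidx r) t : svec u 0 t = if t == u.1 then sg u.2 else 0.
Proof.
rewrite /svec /evec !mxE eqxx /=.
by case: (t == u.1); case: u.2; rewrite /sg /= ?mulr1 ?mulr0.
Qed.

Lemma svec_negs r (u : sidx r) : svec (negs u) = - svec u.
Proof. by apply/matrixP=> i j; rewrite (ord1 i) [RHS]mxE !svecE /=; case: (j == _); case: u.2; rewrite ?oppr0. Qed.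

Lemma rvecE r (i j : 'I_r) b : rvec (i, j, b) = svec (i, false) + svec (j, ~~ b).
Proof. by rewrite /rvec /svec /=; case: b; rewrite /= ?scale1r ?scaleN1r. Qed.

Definition lf r (P : pred nat) (x : 'rV[int]_r) : int := \sum_(i < r | P i) x 0 i.

Lemma lf_svec r P (u : sidx r) : lf P (svec u) = if P u.1 then sg u.2 else 0.
Proof.
rewrite /lf big_mkcond (bigD1 u.1) //= big1 ?addr0.
  by rewrite svecE eqxx; case: (P u.1).
by move=> i /negPf ne; rewrite svecE ne; case: (P i).
Qed.

Lemma lfD r P (x y : 'rV[int]_r) : lf P (x + y) = lf P x + lf P y.
Proof. by rewrite /lf -big_split; apply: eq_bigr => i _; rewrite mxE. Qed.
Lemma lfN r P (x : 'rV[int]_r) : lf P (- x) = - lf P x.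
Proof. by rewrite /lf -sumrN; apply: eq_bigr => i _; rewrite mxE. Qed.
Lemma lf0 r P : lf P (0 : 'rV[int]_r) = 0.
Proof. by rewrite /lf big1 // => i _; rewrite mxE. Qed.
Lemma lfB r P (x y : 'rV[int]_r) : lf P (x - y) = lf P x - lf P y.
Proof. by rewrite lfD lfN. Qed.
Lemma lf_sum r P (I : Type) (s : seq I) (Q : pred I) (F : I -> 'rV[int]_r) :
  lf P (\sum_(i <- s | Q i) F i) = \sum_(i <- s | Q i) lf P (F i).
Proof. by apply: (big_morph _ (lfD P) (lf0 r P)). Qed.

Lemma pairP_lf r k (x : 'rV[int]_r) : pairP k x = lf (fun i => (i < k)%N) x.
Proof. by []. Qed.
Lemma inM_lf r s (x : 'rV[int]_r) : inM s x = ~~ odd (absz (lf (fun i => (i < s)%N) x)).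
Proof. by []. Qed.

Lemma lf_rvec r P (i j : 'I_r) b :
  lf P (rvec (i, j, b)) = (if P i then 1 else 0) + (if P j then sg (~~ b) else 0).
Proof. by rewrite rvecE lfD !lf_svec. Qed.

Lemma inM_rvec r s (i j : 'I_r) b : inM s (rvec (i, j, b)) = ((i < s)%N == (j < s)%N).
Proof.
rewrite inM_lf lf_rvec /sg.
by case: (i < s)%N; case: (j < s)%N; case: b.
Qed.

Lemma pairP_rvec r k (i j : 'I_r) b :
  pairP k (rvec (i, j, b)) = (if (i < k)%N then 1 else 0) + (if (j < k)%N then sg (~~ b) else 0).
Proof. by rewrite pairP_lf lf_rvec. Qed.

Definition cons r (g : {perm sidx r}) := forall u, g (negs u) = negs (g u).

Lemma actD r (g : {perm sidx r}) x y : dact g (x + y) = dact g x + dact g y.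
Proof. by rewrite /dact -big_split; apply: eq_bigr => i _; rewrite mxE scalerDl. Qed.

Lemma act_svec r (g : {perm sidx r}) u : cons g -> dact g (svec u) = svec (g u).
Proof.
move=> cg; rewrite /dact (bigD1 u.1) //= big1 ?addr0.
  rewrite svecE eqxx; case: u => a [|] /=; last by rewrite scale1r.
  by rewrite scaleN1r -svec_negs -cg.
by move=> i /negPf ne; rewrite svecE ne scale0r.
Qed.

Lemma act_rvec r (g : {perm sidx r}) (i j : 'I_r) b : cons g ->
  dact g (rvec (i, j, b)) = svec (g (i, false)) + svec (g (j, ~~ b)).
Proof. by move=> cg; rewrite rvecE actD !act_svec. Qed.

Lemma cons1 r : cons (1%g : {perm sidx r}).
Proof. by move=> u; rewrite !perm1. Qed.

Lemma consM r (g h : {perm sidx r}) : cons g -> cons h -> cons (g * h)%g.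
Proof. by move=> cg ch u; rewrite !permM cg ch. Qed.

Lemma addE r (x y : 'rV[int]_r) t : (x + y) 0 t = x 0 t + y 0 t.
Proof. by rewrite mxE. Qed.

Ltac split_eqs :=
  repeat match goal with
  | |- context [?x == ?x] => rewrite eqxx
  | H : is_true (?x != ?y) |- context [?x == ?y] => rewrite (negPf H)
  | H : is_true (?x != ?y) |- context [?y == ?x] => rewrite [y == x]eq_sym (negPf H)
  | |- context [@eq_op ?T ?x ?y] => lazymatch type of x with
        | ordinal _ => case: (eqVneq x y) => [?|?]; subst end
  end.

Lemma svec2_inj r (u v u' v' : sidx r) :
  ~~((u.1 == v.1) && (u.2 != v.2)) -> ~~((u'.1 == v'.1) && (u'.2 != v'.2)) ->
  svec u + svec v = svec u' + svec v' -> (u = u' /\ v = v') \/ (u = v' /\ v = u').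
Proof.
case: u => a x; case: v => b y; case: u' => a' x'; case: v' => b' y' /= h1 h2 H.
have E t : svec (a,x) 0 t + svec (b,y) 0 t = svec (a',x') 0 t + svec (b',y') 0 t.
  by have := congr1 (fun M : 'rV[int]_r => M 0 t) H; rewrite /= !addE.

move: (E a) (E b) (E a') (E b') h1 h2 => {E H}; rewrite !svecE /=.
split_eqs.
all: case: x; case: y; case: x'; case: y'; rewrite /sg /=; first [by left | by right | lia].
Qed.

Definition posb r (u v : sidx r) : bool :=
  if (u.1 < v.1)%N then ~~ u.2 else if (v.1 < u.1)%N then ~~ v.2 else (u == v) && ~~ u.2.

Lemma posbC r (u v : sidx r) : posb u v = posb v u.
Proof.
case: u v => [a x] [b y]; rewrite /posb /=.
case: ltngtP => // /val_inj eab; subst b.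
by case: x; case: y; rewrite !xpair_eqE ?eqxx.
Qed.

Lemma mem_pos r (p : rind r) : posroot p -> rvec p \in pos r.
Proof. by move=> hp; apply: map_f; rewrite mem_enum. Qed.

Lemma posbP r (u v : sidx r) : ~~((u.1 == v.1) && (u.2 != v.2)) ->
  (svec u + svec v \in pos r) = posb u v.
Proof.
move=> h; apply/idP/idP.
  case/mapP => [[[i j] b]]; rewrite mem_enum => hp; have {}hp : posroot (i, j, b) := hp; rewrite rvecE => /svec2_inj.
  have h2 : ~~ ((((i, false) : sidx r).1 == ((j, ~~ b) : sidx r).1) && (((i, false) : sidx r).2 != ((j, ~~ b) : sidx r).2)).
    rewrite /=; move: hp; rewrite /posroot; case: b => /=; first by rewrite andbF.
    by move=> lij; apply/negP => /andP [/eqP eij]; move: lij; rewrite eij ltnn.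
  case/(_ h h2) => [[-> ->]|[-> ->]]; clear h2; last rewrite posbC;
  move: hp; rewrite /posroot /posb /=; case: b => /= hp.
  - by case: ltngtP => // /val_inj ->; rewrite eqxx.
  - by rewrite hp.
  - by case: ltngtP => // /val_inj ->; rewrite eqxx.
  - by rewrite hp.
case: u v h => [a x] [b y] /= h; rewrite /posb /=.
case: ltngtP => [lab|lba|eab] /=.
- clear h; move/negbTE=> ->; rewrite -[y]negbK -rvecE; apply: mem_pos => /=.
  by case: y => //=; apply: ltnW.
- clear h; move/negbTE=> ->; rewrite addrC -[x]negbK -rvecE; apply: mem_pos => /=.
  by case: x => //=; apply: ltnW.
- have eab' : a = b by apply: val_inj.
  subst b; case/andP => /eqP [<-] /negbTE ->.
  by rewrite -[false]/(~~ true) -rvecE; apply: mem_pos => /=.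
Qed.

Definition blk r s (g : {perm sidx r}) := forall u, ((g u).1 < s)%N = (u.1 < s)%N.

Lemma refl_cons r (p : rind r) : cons (refl p).
Proof.
case: p => [[i j] b] [c x]; rewrite /refl !permE /refl_fun /negs /=.
by case: b; case: (c == i); case: (c == j).
Qed.

Lemma refl_blk r s (p : rind r) : inM s (rvec p) -> blk s (refl p).
Proof.
case: p => [[i j] b]; rewrite inM_rvec => /eqP hij [c x]; rewrite /refl permE /refl_fun /=.
by case: eqP => [->|_] //; case: eqP => [->|_].
Qed.

Lemma WM_prop r s (g : {perm sidx r}) : g \in WM r s -> cons g /\ blk s g.
Proof.
case/gen_prodgP => n [c hc ->].
apply: (big_ind (fun g : {perm sidx r} => cons g /\ blk s g)).
- by split=> [|u]; rewrite ?perm1 //; apply: cons1.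
- move=> x y [cx bx] [cy iy]; split; first exact: consM.
  by move=> u; rewrite permM iy bx.
- move=> i _; case/imsetP: (hc i) => p; rewrite inE => /andP [_ hm] ->.
  by split; [apply: refl_cons | apply: refl_blk].
Qed.

Lemma vE r (a : 'I_r) (c : 'I_r) x :
  refl (a, a, true) (c, x) = (c, if c == a then ~~ x else x).
Proof. by rewrite /refl permE /refl_fun /=; case: eqP => [->|]; rewrite ?orbb. Qed.

Lemma v_in_WQ r s k (a : 'I_r) : (k <= a)%N -> refl (a, a, true) \in WQ r s k.
Proof.
move=> ka; apply: mem_gen; apply/imsetP; exists (a, a, true) => //.
rewrite inE; apply/and3P; split; first exact: leqnn.
  by rewrite inM_rvec.
by rewrite /inLevi pairP_rvec ltnNge ka.
Qed.

Lemma cons_inj1 r (g : {perm sidx r}) u v : cons g -> (g u).1 = (g v).1 -> u.1 = v.1.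
Proof.
move=> cg e; case: (eqVneq (g u).2 (g v).2) => e2.
  have : g u = g v.
    by move: e e2; case: (g u) => a x; case: (g v) => b y /= e1 e2; congr (_, _).
  by move/(@perm_inj _ g) ->.
have : g u = g (negs v).
  rewrite cg; move: e e2; case: (g u) => a x; case: (g v) => b y /= e1 /negPf e2.
  by congr (_, _); case: x y e2 => [] [].
by move/(@perm_inj _ g) ->.
Qed.

Lemma count_sum T (a : pred T) (s : seq T) : count a s = (\sum_(x <- s) (a x : nat))%N.
Proof. by elim: s => [|x s IH]; rewrite ?big_nil ?big_cons //= IH. Qed.

Definition Tm r s (g : {perm sidx r}) (p : rind r) : bool :=
  inM s (rvec p) && ~~ posb (g (p.1.1, false)) (g (p.1.2, ~~ p.2)).

Lemma lenM_sum r s (g : {perm sidx r}) : cons g ->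
  lenM s g = (\sum_(p | posroot p) Tm s g p)%N.
Proof.
move=> cg; rewrite /lenM /pos count_map count_sum big_enum /=.
apply: eq_big => [p|[[i j] b] hp]; first by rewrite unfold_in.
rewrite /Tm /= act_rvec // posbP //.
apply/negP => /andP [/eqP e1 e2].
have := cons_inj1 cg e1; rewrite /= => eij; subst j.
have : g (i, false) = g (i, b).
  rewrite -[b]negbK -[(i, ~~ ~~ b)]/(negs (i, ~~ b)) cg.
  move: e1 e2; case: (g (i, false)) => a x; case: (g (i, ~~ b)) => c y /= e1 /negPf e2.
  by congr (_, _); case: x y e2 => [] [].
move/(@perm_inj _ g) => [eb]; subst b.
by move: hp; rewrite unfold_in /= ltnn.
Qed.

Definition psi r (a : 'I_r) (p : rind r) : rind r :=
  let '(i, j, b) := p in if (j == a) && (i != a) then (i, j, ~~ b) else (i, j, b).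

Lemma psiK r (a : 'I_r) : involutive (psi a).
Proof.
by case=> [[i j] b] /=; case: ifP => h /=; rewrite h ?negbK.
Qed.

Lemma psi_pos r (a : 'I_r) p : posroot (psi a p) = posroot p.
Proof.
case: p => [[i j] b] /=; case: (eqVneq j a) => [->|] //=; case: (eqVneq i a) => [->|ia] //=.
have ia' : (i : nat) != a := ia.
by case: b => /=; rewrite ltn_neqAle ia'.
Qed.

Lemma posb_flip r (c : 'I_r) (y : sidx r) : y.1 != c -> posb (c, true) y -> posb (c, false) y.
Proof.
move=> ne; rewrite /posb /=; case: ltngtP => // e.
by move: ne; rewrite (ord_inj e) eqxx.
Qed.

Lemma TmE r s (g : {perm sidx r}) (i j : 'I_r) b :
  Tm s g (i, j, b) = ((i < s)%N == (j < s)%N) && ~~ posb (g (i, false)) (g (j, ~~ b)).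
Proof. by rewrite /Tm inM_rvec. Qed.

Lemma Tm_le r s (w : {perm sidx r}) (a : 'I_r) p : cons w -> (w (a, false)).2 -> posroot p ->
  (Tm s (refl (a, a, true) * w) (psi a p) <= Tm s w p)%N.
Proof.
move=> cw sa; case: p => [[i j] b] hp.
case: (eqVneq j a) => [ja|ja]; case: (eqVneq i a) => [ia|ia].
- subst i j; case: b hp => [_|]; last by rewrite /= ltnn.
  rewrite /psi eqxx /= [Tm s w _]TmE TmE !permM !vE !eqxx /=.
  rewrite -[(a, true)]/(negs (a, false)) cw.
  move: sa; case: (w (a, false)) => c x /= ->.
  by rewrite /posb /= ltnn eqxx /= andbF.
- subst j; rewrite /psi eqxx ia /= !TmE !permM !vE eqxx (negPf ia) /= negbK.
  by case: (_ && _).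
- subst i; rewrite /psi (negPf ja) /= !TmE !permM !vE eqxx (negPf ja) /=.
  rewrite -[(a, true)]/(negs (a, false)) cw.
  have ne : (w (j, ~~ b)).1 != (w (a, false)).1.
    by apply/negP => /eqP /(cons_inj1 cw) /= e; move: ja; rewrite e eqxx.
  move: ne sa; case: (w (a, false)) => c x /= ne ->.
  case: (_ == _) => //=; have := posb_flip ne; rewrite /negs /=.
  by case: (posb (c, true) _); case: (posb (c, false) _) => // /(_ isT).
- by rewrite /psi /= (negPf ja) /= !TmE !permM !vE (negPf ja) (negPf ia).
Qed.

Lemma Tm_p0 r s (w : {perm sidx r}) (a : 'I_r) : cons w -> (w (a, false)).2 ->
  Tm s w (a, a, true) /\ ~~ Tm s (refl (a, a, true) * w) (psi a (a, a, true)).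
Proof.
move=> cw sa; rewrite /psi eqxx /= [Tm s w _]TmE TmE !permM !vE !eqxx /=.
rewrite -[(a, true)]/(negs (a, false)) cw.
move: sa; case: (w (a, false)) => c x /= ->.
by rewrite /posb /= ltnn !eqxx.
Qed.

Lemma lenM_flip r s (w : {perm sidx r}) (a : 'I_r) : cons w -> (w (a, false)).2 ->
  (lenM s (refl (a, a, true) * w) < lenM s w)%N.
Proof.
move=> cw sa.
have cv : cons (refl (a, a, true) * w) := consM (refl_cons _) cw.
rewrite !lenM_sum // (reindex_inj (can_inj (psiK a))) /=.
rewrite (eq_bigl (@posroot r)) => [|p]; last by rewrite psi_pos.
have hp0 : posroot (a, a, true) by rewrite /= leqnn.
rewrite (bigD1 (a, a, true) hp0) [X in (_ < X)%N](bigD1 (a, a, true) hp0) /=.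
have [t1 t2] := Tm_p0 s cw sa.
rewrite (negPf t2) t1 add0n add1n ltnS.
by apply: leq_sum => p /andP [hp _]; apply: Tm_le.
Qed.

Lemma WMQ_sign r s k (w : {perm sidx r}) (a : 'I_r) :
  WMQ s k w -> (k <= a)%N -> ~~ (w (a, false)).2.
Proof.
case/andP => hw /forall_inP hmin ka; apply/negP => sa.
have [cw _] := WM_prop hw.
have := hmin _ (v_in_WQ s ka).
by rewrite leqNgt lenM_flip.
Qed.

Lemma factF r s k (w : {perm sidx r}) be : (k <= s)%N -> WMQ s k w ->
  be \in pos r -> ~~ inM s be -> inLevi k be -> dact w be \in pos r.
Proof.
move=> ks hw; case/mapP => [[[i j] b]]; rewrite mem_enum => hp ->.
have {}hp : posroot (i, j, b) := hp.
have hij : (i <= j)%N by move: hp => /=; case: b => // /ltnW.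
rewrite inM_rvec /inLevi pairP_rvec => hm.
have [si sj] : (i < s)%N /\ ~~ (j < s)%N.
  move: hm; case: (ltnP i s); case: (ltnP j s) => //= h1 h2 _.
  lia.
have jk : ~~ (j < k)%N by rewrite -leqNgt; apply: leq_trans ks _; rewrite leqNgt.
rewrite (negPf jk) addr0; case: ifP => // ik _; move/negbT: ik; rewrite -leqNgt => ki.
have [cw bw] := WM_prop (proj1 (andP hw)).
rewrite act_rvec //.
have s1 := WMQ_sign hw ki.
have b1 := bw (i, false); have b2 := bw (j, ~~ b).
move: s1 b1 b2; case: (w (i, false)) => c x; case: (w (j, ~~ b)) => d y /= /negPf -> b1 b2.
have cs : (c < s)%N by rewrite b1.
have ds : ~~ (d < s)%N by rewrite b2.
have cd : (c < d)%N by lia.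
rewrite posbP /=; first by rewrite /posb /= cd.
by apply/negP => /andP [/eqP e _]; move: cd; rewrite e ltnn.
Qed.

Lemma pairP_one r s k (x : 'rV[int]_r) : (k <= s)%N -> x \in pos r ->
  ~~ inM s x -> ~~ inLevi k x -> pairP k x = 1.
Proof.
move=> ks; case/mapP => [[[i j] b]]; rewrite mem_enum => hp ->.
have {}hp : posroot (i, j, b) := hp.
have hij : (i <= j)%N by move: hp => /=; case: b => // /ltnW.
rewrite inM_rvec /inLevi pairP_rvec => hm.
have [si sj] : (i < s)%N /\ ~~ (j < s)%N.
  move: hm; case: (ltnP i s); case: (ltnP j s) => //= h1 h2 _.
  lia.
have jk : ~~ (j < k)%N by rewrite -leqNgt; apply: leq_trans ks _; rewrite leqNgt.
by rewrite (negPf jk) addr0; case: ifP.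
Qed.

Lemma Posz_sum T (s : seq T) (F : T -> nat) :
  Posz (\sum_(x <- s) F x)%N = \sum_(x <- s) Posz (F x).
Proof. by apply: (big_morph _ PoszD). Qed.

Lemma diff_w r s k (w : {perm sidx r}) : (k <= s)%N ->
  (forall be, be \in pos r -> ~~ inM s be -> inLevi k be -> dact w be \in pos r) ->
  pairP k (chi k w) - pairP k (chiM s k w) =
  ((dimGP r k)%:Z - (dimMQ r s k)%:Z) - ((lenG w)%:Z - (lenM s w)%:Z).
Proof.
move=> ks hF.
rewrite /chi /chiM !pairP_lf !lf_sum /dimGP /dimMQ /lenG /lenM !count_sum !Posz_sum.
rewrite [\sum_(_ <- _ | _) _]big_mkcond [X in _ - X]big_mkcond /= -!sumrB.
apply: eq_big_seq => x hx.
have h1 := pairP_one ks hx; have h2 := hF x hx.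
rewrite -!pairP_lf.
move: h1 h2; case: (inM s x); case: (inLevi k x); case: (dact w x \in pos r) => //=;
  try (move=> h1 h2; first [lia | rewrite h1 //; lia]).
Qed.

Lemma act1_pos r (x : 'rV[int]_r) : x \in pos r -> dact 1%g x = x.
Proof.
case/mapP => [[[i j] b]] _ ->.
rewrite act_rvec; last exact: cons1.
by rewrite rvecE; congr (svec _ + svec _); apply: perm1.
Qed.

Lemma len1 r s : lenG (1%g : {perm sidx r}) = 0%N /\ lenM s (1%g : {perm sidx r}) = 0%N.
Proof.
split; rewrite /lenG /lenM (eq_in_count (a2 := pred0)) ?count_pred0 // => x hx /=;
by rewrite act1_pos // hx ?andbF.
Qed.

Lemma pairPB r k (x y : 'rV[int]_r) : pairP k (x - y) = pairP k x - pairP k y.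
Proof. exact: (lfB (fun i => (i < k)%N) x y). Qed.
Lemma pairP_sum r k (I : Type) (s : seq I) (F : I -> 'rV[int]_r) :
  pairP k (\sum_(i <- s) F i) = \sum_(i <- s) pairP k (F i).
Proof. exact: (lf_sum (fun i => (i < k)%N) s xpredT F). Qed.

Lemma swap4 (a b c d : int) : a - c - (b - d) = (a - b) - (c - d).
Proof. by rewrite !opprD !opprK addrACA. Qed.

Unset Implicit Arguments.

Theorem mainTheorem9 (r s k : nat) (hk : (1 <= k)%N) (hks : (k <= s)%N)
    (hsr : (s < r)%N) (ws : seq {perm sidx r})
    (hws : all (WMQ s k) ws) :
  theta k ws - thetaM s k ws = expdimG k ws - expdimM s k ws.
Proof.
rewrite /theta /thetaM /expdimG /expdimM !pairPB !pairP_sum.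
have h1 := diff_w (w := 1%g) hks (fun be hb _ _ => etrans (congr1 (fun z => z \in pos r) (act1_pos hb)) hb).
have [l1 l2] := len1 r s.
rewrite l1 l2 subrr subr0 in h1.
have hs : \sum_(w <- ws) (pairP k (chi k w) - pairP k (chiM s k w)) =
          \sum_(w <- ws) (codimG k w - codimM s k w).
  apply: eq_big_seq => w hw; rewrite diff_w //; last first.
    by move=> be; apply: factF => //; move/allP: hws; apply.
  by rewrite /codimG /codimM; lia.
rewrite [LHS]sumrB [RHS]sumrB in hs.
move: h1 hs.
move: (pairP k (chi k 1)) (pairP k (chiM s k 1)) (\sum_(i <- ws) pairP k (chi k i)).
move: (\sum_(i <- ws) pairP k (chiM s k i)) (\sum_(i <- ws) codimG k i) (\sum_(i <- ws) codimM s k i).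
move: (dimGP r k : int) (dimMQ r s k : int) => A B C D E F G H h1 hs.
by rewrite swap4 [RHS]swap4 h1 hs.
Qed.
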